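(* Let $\vec{k}=(k_1,\dots,k_n)$ be a vector of positive integers and let $\overline{D}$ be a $\vec{k}$-Dyck path with $\operatorname{area}(\overline{D})>0$. Let $\mathbb{S}$ be the rightmost red arrow of $\overline{D}$ among the red arrows whose starting rank is maximal among all red arrows, and let $\mathbb{W}$ be the step immediately following $\mathbb{S}$ (which is a blue arrow). Let $\overline{D}'$ be the word obtained from $\overline{D}$ by interchanging the two adjacent letters $\mathbb{S}$ and $\mathbb{W}$ (so $\overline{D}'$ is again a $\vec{k}$-Dyck path, with $\operatorname{area}(\overline{D}')=\operatorname{area}(\overline{D})-1$). Let $D=\Phi(\overline{D})$ and $D'=\Phi(\overline{D}')$. Then $$\operatorname{dinv}(\overline{D})-\operatorname{dinv}(\overline{D}')=\operatorname{area}(D)-\operatorname{area}(D').$$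
   Context: For a vector $\vec{k}=(k_1,\dots,k_n)$ of positive integers put $|\vec{k}|=\sum_i k_i$. A $\vec{k}$-Dyck path is a word $D=\sigma_1\cdots\sigma_N$, $N=|\vec{k}|+n$, consisting of $n$ red arrows and $|\vec{k}|$ blue arrows $W$, where the $j$-th red arrow from the left is $S^{k_j}$ of length $\ell=k_j$ and value $k_j$, and each $W$ has value $-1$. Ranks: $r_1=0$, $r_{m+1}=r_m+(\text{value of }\sigma_m)$, required to satisfy $r_m\ge0$ for all $m$. The starting rank of $\sigma_m$ is $r(\sigma_m)=r_m$ and its end rank is $\dot r(\sigma_m)=r_{m+1}$. (Geometrically: a path from $(0,0)$ to $(N,0)$ never below the horizontal axis with up steps $(1,k_j)$ and down steps $(1,-1)$; ranks are starting heights.) Write $A<B$ if step $A$ is left of step $B$, and $A<^sB$ if $r(A)<r(B)$, or $r(A)=r(B)$ and $B<A$. The sweep map $\Phi$ sends $D$ to the word listing its steps in increasing $<^s$ order; this is again a Dyck path for some rearrangement of $\vec{k}$. $\operatorname{area}(D)=\sum_S r(S)$ over red arrows $S$. $\operatorname{dinv}(D)$ = (sweep dinv) + (red dinv), where sweep dinv is the number of pairs (blue arrow $W$, red arrow $S$) with $W<S$ and $W$ sweeping $S$, i.e. $W$ intersects $S$ when moved to the right past $S$ along a line of slope $0<\epsilon\ll1$; equivalently $r(S)\le r(W)\le\dot r(S)$; and red dinv is $\sum_{S_i<S_j}\chi(r(S_i)\ge r(S_j)\ \&\ \dot r(S_j)>\dot r(S_i))(\dot r(S_j)-\dot r(S_i))+\sum_{S_i<S_j}\chi(r(S_i)<r(S_j)\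 \&\ \dot r(S_j)<\dot r(S_i))(\dot r(S_i)-\dot r(S_j))$ over pairs of red arrows. *)

(* Defs.v *)
From mathcomp Require Import all_boot all_order all_algebra.
Set Implicit Arguments. Unset Strict Implicit. Unset Printing Implicit Defensive.
Import Order.TTheory GRing.Theory Num.Theory.

(* A step of a path: [Some k] is the red arrow S^k (value k),
   [None] is the blue arrow W (value -1). *)
Definition step := option nat.

Definition is_red (x : step) : bool := x != None.

Definition value (x : step) : int :=
  match x with Some k => (k : int) | None => (-1)%R end.

Local Open Scope ring_scope.

(* rank w m = r_{m+1} (0-indexed): sum of values of the first m steps;
   the starting rank of step i (0-indexed) is rank w i. *)
Definition rank (w : seq step) (m : nat) : int :=
  \sum_(i < m) value (nth None w i).

Definition rdot (w : seq step) (i : nat) : int := rank w i.+1.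

(* w is a k-Dyck path: the red arrows, read left to right, are
   S^{k_1}, ..., S^{k_n}; there are |k| blue arrows; all ranks r_1..r_{N+1} >= 0.
   (k is assumed to consist of positive integers separately.) *)
Definition is_Dyck (k : seq nat) (w : seq step) : bool :=
  [&& pmap id w == k,
      count (pred1 None) w == sumn k &
      all (fun m => 0 <= rank w m) (iota 0 (size w).+1)].

Definition sweep_le (w : seq step) (i j : nat) : bool :=
  (rank w i < rank w j) || ((rank w i == rank w j) && (j <= i)%N).

Definition sweep (w : seq step) : seq step :=
  [seq nth None w i | i <- sort (sweep_le w) (iota 0 (size w))].

Definition area (w : seq step) : int :=
  \sum_(i < size w | is_red (nth None w i)) rank w i.

Definition sweep_dinv (w : seq step) : int :=
  \sum_(i < size w) \sum_(j < size w |
      [&& (i < j)%N, nth None w i == None, is_red (nth None w j) &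
          (rank w j <= rank w i <= rdot w j)]) 1.

Definition red_dinv (w : seq step) : int :=
  \sum_(i < size w) \sum_(j < size w |
      [&& (i < j)%N, is_red (nth None w i) & is_red (nth None w j)])
    ((if (rank w j <= rank w i) && (rdot w i < rdot w j)
      then rdot w j - rdot w i else 0)
   + (if (rank w i < rank w j) && (rdot w j < rdot w i)
      then rdot w i - rdot w j else 0)).

Definition dinv (w : seq step) : int := sweep_dinv w + red_dinv w.

Definition swap_adj (w : seq step) (s : nat) : seq step :=
  take s w ++ [:: nth None w s.+1; nth None w s] ++ drop s.+2 w.

(* Main.v *)
Require Import Defs.
From mathcomp Require Import all_boot all_order all_algebra.
From mathcomp Require Import zify ring.
Import Order.TTheory GRing.Theory Num.Theory.
Local Open Scope ring_scope.



Definition ind (b : bool) : int := if b then 1 else 0.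

Lemma rankS w m : rank w m.+1 = rank w m + value (nth None w m).
Proof. by rewrite /rank big_ord_recr. Qed.

Lemma rank0 w : rank w 0 = 0.
Proof. by rewrite /rank big_ord0. Qed.

Lemma rdotE w i : rdot w i = rank w i + value (nth None w i).
Proof. exact: rankS. Qed.

Lemma sweep_le_total w : total (sweep_le w).
Proof. move=> i j; rewrite /sweep_le; lia. Qed.

Lemma sweep_le_trans w : transitive (sweep_le w).
Proof. move=> j i l; rewrite /sweep_le; lia. Qed.

Lemma sweep_le_anti w i j : sweep_le w i j -> sweep_le w j i -> i = j.
Proof. rewrite /sweep_le; lia. Qed.



Definition item := (nat * step * int)%type.
Definition d (w : seq step) (i : nat) : item := (i, nth None w i, rank w i).

Definition Kd (x y : item) : int :=
  let: (px, ax, rx) := x in let: (py, ay, ry) := y in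
  (if [&& (px < py)%N, ax == None, is_red ay & (ry <= rx <= ry + value ay)] then 1 else 0)
  + (if [&& (px < py)%N, is_red ax & is_red ay] then
      (if (ry <= rx) && (rx + value ax < ry + value ay) then (ry + value ay) - (rx + value ax) else 0)
      + (if (rx < ry) && (ry + value ay < rx + value ax) then (rx + value ax) - (ry + value ay) else 0)
     else 0).

Definition Ka (x y : item) : int :=
  let: (px, ax, rx) := x in let: (py, ay, ry) := y in
  if is_red ax && (((ry < rx) || ((ry == rx) && (px <= py)%N)) && (py != px)) then value ay else 0.

Lemma dinv_K w : dinv w = \sum_(0 <= i < size w) \sum_(0 <= j < size w) Kd (d w i) (d w j).
Proof.
rewrite /dinv /sweep_dinv /red_dinv big_mkord -big_split /=; apply: eq_bigr => i _.
rewrite big_mkord (big_mkcond _ (fun j => 1)) (big_mkcond _ (fun j => _ + _)) -big_split /=.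
apply: eq_bigr => j _; rewrite /Kd /d /= !rdotE.
by case: ifP => _; case: ifP => _; rewrite ?addr0 ?add0r.
Qed.

Definition sig w := sort (sweep_le w) (iota 0 (size w)).

Lemma size_sig w : size (sig w) = size w.
Proof. by rewrite /sig size_sort size_iota. Qed.

Lemma sig_lt w p q : (p < size w)%N -> (q < size w)%N ->
  (q < p)%N = sweep_le w (nth 0%N (sig w) q) (nth 0%N (sig w) p) && (nth 0%N (sig w) q != nth 0%N (sig w) p).
Proof.
move=> hp hq.
have U : uniq (sig w) by rewrite /sig sort_uniq iota_uniq.
have So : sorted (sweep_le w) (sig w) by apply: sort_sorted; apply: sweep_le_total.
have hp' : (p < size (sig w))%N by rewrite size_sig.
have hq' : (q < size (sig w))%N by rewrite size_sig.
rewrite nth_uniq //.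
case: (ltngtP q p) => hqp.
- by rewrite (sorted_ltn_nth (@sweep_le_trans w) 0%N So q p hq' hp' hqp).
- apply/esym/negbTE/negP => /andP [H1 _].
  have H3 := sorted_ltn_nth (@sweep_le_trans w) 0%N So p q hp' hq' hqp.
  have /eqP := @sweep_le_anti _ _ _ H1 H3; rewrite nth_uniq // => /eqP E.
  by move: hqp; rewrite E ltnn.
- by rewrite andbF.
Qed.

Lemma size_sweep w : size (sweep w) = size w.
Proof. by rewrite /sweep size_map size_sig. Qed.

Lemma nth_sweep w p : (p < size w)%N -> nth None (sweep w) p = nth None w (nth 0%N (sig w) p).
Proof. by move=> hp; rewrite /sweep (nth_map 0%N) // size_sort size_iota. Qed.

Lemma sum_prefix (F : nat -> int) p n : (p <= n)%N ->
  \sum_(0 <= q < p) F q = \sum_(0 <= q < n) (if (q < p)%N then F q else 0).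
Proof.
move=> hpn; rewrite (@big_cat_nat _ _ _ p 0%N n _ _ (leq0n p) hpn) /= [X in _ = _ + X]big1_seq ?addr0.
  by apply: eq_big_nat => q /andP [_ ->].
by move=> q /andP [_]; rewrite mem_index_iota => /andP [h _]; rewrite ltnNge h.
Qed.

Lemma sum_nth_seq (G : nat -> int) (s : seq nat) :
  \sum_(0 <= p < size s) G (nth 0%N s p) = \sum_(x <- s) G x.
Proof. by rewrite [RHS](big_nth 0%N). Qed.

Lemma sum_sig (G : nat -> int) w :
  \sum_(x <- sig w) G x = \sum_(0 <= i < size w) G i.
Proof.
have -> : \sum_(x <- sig w) G x = \sum_(x <- iota 0 (size w)) G x.
  by apply: perm_big; rewrite /sig perm_sort perm_refl.
by rewrite /index_iota subn0.
Qed.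

Lemma sum2_sig w (H : nat -> nat -> int) :
  \sum_(0<=p<size (sig w)) \sum_(0<=q<size (sig w)) H (nth 0%N (sig w) p) (nth 0%N (sig w) q)
  = \sum_(0<=i<size w) \sum_(0<=j<size w) H i j.
Proof.
rewrite (sum_nth_seq (fun x => \sum_(0<=q<size (sig w)) H x (nth 0%N (sig w) q))) sum_sig.
by apply: eq_big_nat => i _; rewrite (sum_nth_seq (H i)) sum_sig.
Qed.

Lemma area_sweep w : area (sweep w) = \sum_(0 <= i < size w) \sum_(0 <= j < size w) Ka (d w i) (d w j).
Proof.
rewrite /area size_sweep big_mkcond /=.
rewrite (_ : \sum_(i < size w) _ = \sum_(0 <= i < size w) (if is_red (nth None (sweep w) i) then rank (sweep w) i else 0)); last by rewrite big_mkord.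
pose s := sig w.
transitivity (\sum_(0 <= p < size s) \sum_(0 <= q < size s)
   Ka (d w (nth 0%N s p)) (d w (nth 0%N s q))).
  rewrite size_sig; apply: eq_big_nat => p /andP [_ hp].
  rewrite nth_sweep // /rank.
  rewrite (_ : \sum_(i < p) _ = \sum_(0 <= i < p) value (nth None (sweep w) i)); last by rewrite big_mkord.
  rewrite (@sum_prefix _ p (size w) (ltnW hp)).
  case: ifP => hred; last first.
    by rewrite big1_seq // => q _; rewrite /Ka /d /= hred.
  apply: eq_big_nat => q /andP [_ hq].
  rewrite (@sig_lt w p q hp hq) nth_sweep // /Ka /d /= hred /sweep_le /=.
  reflexivity.
have := sum2_sig w (fun i j => Ka (d w i) (d w j)); rewrite /= => ->.
by [].
Qed.



Lemma split3 (F : nat -> int) n s : (s.+1 < n)%N ->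
  \sum_(0 <= i < n) F i = \sum_(0 <= i < s) F i + F s + F s.+1 + \sum_(s.+2 <= i < n) F i.
Proof.
move=> h.
rewrite (@big_cat_nat _ _ _ s 0%N n _ _ (leq0n s)) /=; last by apply: leq_trans h; rewrite ltnW.
rewrite (@big_ltn _ _ _ s n); last by apply: ltnW.
rewrite (@big_ltn _ _ _ s.+1 n) //.
by rewrite !addrA.
Qed.

Section DS.
Variable T : Type.
Variable K : T -> T -> int.

Definition phi (f g : nat -> T) s i :=
  (K (f i) (f s) + K (f i) (f s.+1) + K (f s) (f i) + K (f s.+1) (f i))
  - (K (g i) (g s) + K (g i) (g s.+1) + K (g s) (g i) + K (g s.+1) (g i)).

Definition blk (h : nat -> T) s :=
  K (h s) (h s) + K (h s) (h s.+1) + K (h s.+1) (h s) + K (h s.+1) (h s.+1).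

Lemma double_split (f g : nat -> T) n s : (s.+1 < n)%N ->
  (forall i, i != s -> i != s.+1 -> f i = g i) ->
  \sum_(0<=i<n) \sum_(0<=j<n) K (f i) (f j) - \sum_(0<=i<n) \sum_(0<=j<n) K (g i) (g j)
  = \sum_(0<=i<s) phi f g s i + \sum_(s.+2<=i<n) phi f g s i + (blk f s - blk g s).
Proof.
move=> hn hfg.
have hL : forall i, (i < s)%N -> f i = g i.
  by move=> i hi; apply: hfg; apply/negP => /eqP E; move: hi; rewrite E ?ltnn // ltnNge leqnSn.
have hR : forall i, (s.+2 <= i)%N -> f i = g i.
  by move=> i hi; apply: hfg; apply/negP => /eqP E; move: hi; rewrite E ?ltnn // ltnNge leqnSn.
have E : forall h : nat -> T, \sum_(0<=i<n) \sum_(0<=j<n) K (h i) (h j) =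
  \sum_(0<=i<s) (\sum_(0<=j<s) K (h i) (h j) + \sum_(s.+2<=j<n) K (h i) (h j))
  + \sum_(s.+2<=i<n) (\sum_(0<=j<s) K (h i) (h j) + \sum_(s.+2<=j<n) K (h i) (h j))
  + \sum_(0<=i<s) (K (h i) (h s) + K (h i) (h s.+1) + K (h s) (h i) + K (h s.+1) (h i))
  + \sum_(s.+2<=i<n) (K (h i) (h s) + K (h i) (h s.+1) + K (h s) (h i) + K (h s.+1) (h i))
  + blk h s.
  move=> h.
  under eq_bigr do rewrite (@split3 _ n s hn).
  rewrite (@split3 (fun i => \sum_(0 <= j < s) K (h i) (h j) + K (h i) (h s) + K (h i) (h s.+1) + \sum_(s.+2 <= j < n) K (h i) (h j)) n s hn) /blk /= !big_split /=.
  ring.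
rewrite !E.
have -> : \sum_(0<=i<s) (\sum_(0<=j<s) K (f i) (f j) + \sum_(s.+2<=j<n) K (f i) (f j))
  = \sum_(0<=i<s) (\sum_(0<=j<s) K (g i) (g j) + \sum_(s.+2<=j<n) K (g i) (g j)).
  apply: eq_big_nat => i /andP [_ hi]; rewrite (hL _ hi); congr (_ + _).
    by apply: eq_big_nat => j /andP [_ hj]; rewrite (hL _ hj).
  by apply: eq_big_nat => j /andP [hj _]; rewrite (hR _ hj).
have -> : \sum_(s.+2<=i<n) (\sum_(0<=j<s) K (f i) (f j) + \sum_(s.+2<=j<n) K (f i) (f j))
  = \sum_(s.+2<=i<n) (\sum_(0<=j<s) K (g i) (g j) + \sum_(s.+2<=j<n) K (g i) (g j)).
  apply: eq_big_nat => i /andP [hi _]; rewrite (hR _ hi); congr (_ + _).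
    by apply: eq_big_nat => j /andP [_ hj]; rewrite (hL _ hj).
  by apply: eq_big_nat => j /andP [hj _]; rewrite (hR _ hj).
rewrite /phi !sumrB.
ring.
Qed.
End DS.



Definition Kf x y := Kd x y - Ka x y.

Ltac crush := rewrite /Kf /Kd /Ka /ind /=;
  repeat (case: ifP => ?; try (exfalso; lia)); lia.

Lemma phiL (i s : nat) (a : step) (ri r : int) (k : nat) : (i < s)%N -> (0 < k)%N ->
  (is_red a -> ri <= r) -> 1 <= r ->
  (Kf (i,a,ri) (s,Some k,r) + Kf (i,a,ri) (s.+1,None,r + k%:Z) + Kf (s,Some k,r) (i,a,ri) + Kf (s.+1,None,r+k%:Z) (i,a,ri))
  - (Kf (i,a,ri) (s,None,r) + Kf (i,a,ri) (s.+1,Some k,r-1) + Kf (s,None,r) (i,a,ri) + Kf (s.+1,Some k,r-1) (i,a,ri))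
  = - (ind (r + k%:Z - 1 < ri + value a) - ind (r + k%:Z - 1 < ri)).
Proof.
move=> his hk hred hr.
have h1 : (s < i)%N = false by lia.
have h2 : (s.+1 < i)%N = false by lia.
have h3 : (s <= i)%N = false by lia.
have h4 : (s.+1 <= i)%N = false by lia.
have h5 : (i < s.+1)%N by lia.
have h6 : (i == s) = false by lia.
have h7 : (i == s.+1) = false by lia.
have h8 : (s == i) = false by lia.
have h9 : (s.+1 == i) = false by lia.
case: a hred => [ki|] hred /=.
  have {}hred := hred isT.
  rewrite /Kf /Kd /Ka /ind /= ?his ?h1 ?h2 ?h3 ?h4 ?h5 ?h6 ?h7 ?h8 ?h9 /=.
  by repeat (case: ifP => ?; try (exfalso; lia)); lia.
rewrite /Kf /Kd /Ka /ind /= ?his ?h1 ?h2 ?h3 ?h4 ?h5 ?h6 ?h7 ?h8 ?h9 /=.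
by repeat (case: ifP => ?; try (exfalso; lia)); lia.
Qed.

Lemma phiR (i s : nat) (a : step) (ri r : int) (k : nat) : (s.+1 < i)%N -> (0 < k)%N ->
  (is_red a -> ri < r) -> 1 <= r ->
  (Kf (i,a,ri) (s,Some k,r) + Kf (i,a,ri) (s.+1,None,r + k%:Z) + Kf (s,Some k,r) (i,a,ri) + Kf (s.+1,None,r+k%:Z) (i,a,ri))
  - (Kf (i,a,ri) (s,None,r) + Kf (i,a,ri) (s.+1,Some k,r-1) + Kf (s,None,r) (i,a,ri) + Kf (s.+1,Some k,r-1) (i,a,ri))
  = - (ind (r - 1 < ri + value a) - ind (r - 1 < ri)).
Proof.
move=> his hk hred hr.
have h1 : (s < i)%N by lia.
have h2 : (s.+1 < i)%N by lia.
have h3 : (i < s)%N = false by lia.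
have h5 : (i < s.+1)%N = false by lia.
have h6 : (i == s) = false by lia.
have h7 : (i == s.+1) = false by lia.
have h8 : (s == i) = false by lia.
have h9 : (s.+1 == i) = false by lia.
have h10 : (i <= s)%N = false by lia.
have h11 : (i <= s.+1)%N = false by lia.
case: a hred => [ki|] hred /=.
  have {}hred := hred isT.
  rewrite /Kf /Kd /Ka /ind /= ?h1 ?h2 ?h3 ?h5 ?h6 ?h7 ?h8 ?h9 ?h10 ?h11 /=.
  by repeat (case: ifP => ?; try (exfalso; lia)); lia.
rewrite /Kf /Kd /Ka /ind /= ?h1 ?h2 ?h3 ?h5 ?h6 ?h7 ?h8 ?h9 ?h10 ?h11 /=.
by repeat (case: ifP => ?; try (exfalso; lia)); lia.
Qed.

Lemma blkE (s : nat) (r : int) (k : nat) : (0 < k)%N -> 1 <= r ->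
  (Kf (s,Some k,r) (s,Some k,r) + Kf (s,Some k,r) (s.+1,None,r+k%:Z) + Kf (s.+1,None,r+k%:Z) (s,Some k,r)
    + Kf (s.+1,None,r+k%:Z) (s.+1,None,r+k%:Z))
  - (Kf (s,None,r) (s,None,r) + Kf (s,None,r) (s.+1,Some k,r-1) + Kf (s.+1,Some k,r-1) (s,None,r)
    + Kf (s.+1,Some k,r-1) (s.+1,Some k,r-1)) = -1.
Proof.
move=> hk hr.
rewrite /Kf /Kd /Ka /ind /= ?ltnn ?leqnn ?eqxx ?ltnSn ?leqnSn /=.
have h : (s.+1 < s)%N = false by lia.
have h' : (s.+1 == s) = false by lia.
have h'' : (s == s.+1) = false by lia.
rewrite ?h ?h' ?h'' /=.
by repeat (case: ifP => ?; try (exfalso; lia)); lia.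
Qed.



Lemma size_swap w s : (s.+1 < size w)%N -> size (swap_adj w s) = size w.
Proof.
move=> h; rewrite /swap_adj !size_cat size_take size_drop /=.
have -> : (s < size w)%N by lia.
lia.
Qed.

Lemma nth_swap w s i : (s.+1 < size w)%N ->
  nth None (swap_adj w s) i =
  if i == s then nth None w s.+1 else if i == s.+1 then nth None w s else nth None w i.
Proof.
move=> h; rewrite /swap_adj nth_cat size_take.
have -> : (s < size w)%N by lia.
case: (ltngtP i s) => his.
- have -> : (i == s.+1) = false by lia.
  by rewrite nth_take // ?(ltn_eqF his).
- rewrite nth_cat /=.
  case: (ltngtP i s.+1) => h2.
  + lia.
  + rewrite (_ : (i - s < 2)%N = false); last by lia.
    rewrite nth_drop; congr nth; lia.
  + by rewrite h2 subSnn.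
- by rewrite his subnn.
Qed.

Lemma rank_swap_lo w s m : (s.+1 < size w)%N -> (m <= s)%N -> rank (swap_adj w s) m = rank w m.
Proof.
move=> h; elim: m => [|m IH] hm; first by rewrite !rank0.
rewrite !rankS IH; last by lia.
rewrite nth_swap // (_ : (m == s) = false); last by lia.
by rewrite (_ : (m == s.+1) = false) //; lia.
Qed.

Lemma rank_swap_s1 w s : (s.+1 < size w)%N ->
  rank (swap_adj w s) s.+1 = rank w s + value (nth None w s.+1).
Proof. by move=> h; rewrite rankS rank_swap_lo // nth_swap // eqxx. Qed.

Lemma rank_swap_hi w s m : (s.+1 < size w)%N -> (s.+2 <= m)%N -> rank (swap_adj w s) m = rank w m.
Proof.
move=> h hm; rewrite -(subnKC hm); elim: (m - s.+2)%N => [|e IH].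
  rewrite addn0 rankS rank_swap_s1 // nth_swap // eqxx (_ : (s.+1 == s) = false); last by lia.
  rewrite [in RHS]rankS [in RHS]rankS; ring.
rewrite addnS rankS [in RHS]rankS IH nth_swap // (_ : (s.+2 + e == s) = false); last by lia.
by rewrite (_ : (s.+2 + e == s.+1) = false) //; lia.
Qed.

Lemma sum_values w : \sum_(i < size w) value (nth None w i)
  = (sumn (pmap id w))%:Z - (count (pred1 None) w)%:Z.
Proof.
elim: w => [|x w IH]; first by rewrite big_ord0.
rewrite /= big_ord_recl /= IH.
case: x => [k|] /=; rewrite ?natrD /=; lia.
Qed.



Theorem lemma3p3 (k : seq nat) (Dbar : seq step) (s : nat) :
  all (fun x => 0 < x)%N k ->
  is_Dyck k Dbar ->
  0 < area Dbar ->
  (* s is the position of the rightmost red arrow of maximal starting rank *)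
  (s < size Dbar)%N ->
  is_red (nth None Dbar s) ->
  (forall j, (j < size Dbar)%N -> is_red (nth None Dbar j) ->
     rank Dbar j <= rank Dbar s) ->
  (forall j, (s < j < size Dbar)%N -> is_red (nth None Dbar j) ->
     rank Dbar j < rank Dbar s) ->
  dinv Dbar - dinv (swap_adj Dbar s)
    = area (sweep Dbar) - area (sweep (swap_adj Dbar s)).
Proof.
move=> hk hD harea hs hred hmax hright.
set w := Dbar in hD harea hs hred hmax hright *.
set n := size w in hs hmax hright *.
set r := rank w s.
case/and3P: hD => /eqP hpm /eqP hcnt _.
case E : (nth None w s) hred => [k0|] // _.
have hk0 : (0 < k0)%N.
  have : k0 \in k.
    rewrite -hpm mem_pmap map_id -E; exact: mem_nth.
  by move/(allP hk).
have hrn : rank w n = 0.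
  by rewrite /rank /n sum_values hpm hcnt subrr.
have hr1 : 1 <= r.
  rewrite leNgt; apply/negP => hr0.
  move: harea; rewrite ltNge => /negP; apply.
  apply: sumr_le0 => i hi.
  have := hmax i (ltn_ord i) hi; rewrite -/r; lia.
have hrs1 : rank w s.+1 = r + k0%:Z by rewrite rankS E.
have hn : (s.+1 < n)%N.
  rewrite ltn_neqAle hs andbT; apply/negP => /eqP hsn.
  by move: hrn; rewrite -hsn hrs1; lia.
have E1 : nth None w s.+1 = None.
  case E1 : (nth None w s.+1) => [k1|] //.
  have := hright s.+1; rewrite ltnSn hn E1 /= hrs1 -/r => /(_ isT isT); lia.
have hrs2 : rank w s.+2 = r + k0%:Z - 1 by rewrite rankS hrs1 E1.
set w' := swap_adj w s.
have szw' : size w' = n by rewrite /w' size_swap.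
have ds : d w s = (s, Some k0, r) by rewrite /d E.
have ds1 : d w s.+1 = (s.+1, None, r + k0%:Z) by rewrite /d E1 hrs1.
have dps : d w' s = (s, None, r).
  by rewrite /d /w' nth_swap // eqxx E1 rank_swap_lo.
have dps1 : d w' s.+1 = (s.+1, Some k0, r - 1).
  rewrite /d /w' nth_swap // eqxx (_ : (s.+1 == s) = false); last by lia.
  by rewrite E rank_swap_s1 // E1.
have hfg : forall i, i != s -> i != s.+1 -> d w i = d w' i.
  move=> i h1 h2; rewrite /d /w' nth_swap // (negbTE h1) (negbTE h2).
  case: (leqP i s) => hi; first by rewrite rank_swap_lo.
  rewrite rank_swap_hi //; lia.
have eK : forall v, \sum_(0 <= i < size v) \sum_(0 <= j < size v) Kf (d v i) (d v j)
   = \sum_(0 <= i < size v) \sum_(0 <= j < size v) Kd (d v i) (d v j)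
   - \sum_(0 <= i < size v) \sum_(0 <= j < size v) Ka (d v i) (d v j).
  by move=> v; rewrite -sumrB; apply: eq_bigr => i _; rewrite -sumrB.
have H := @double_split _ Kf (d w) (d w') n s hn hfg.
have Hw : \sum_(0<=i<n) \sum_(0<=j<n) Kf (d w i) (d w j) = dinv w - area (sweep w).
  by rewrite /n eK dinv_K area_sweep.
have Hw' : \sum_(0<=i<n) \sum_(0<=j<n) Kf (d w' i) (d w' j) = dinv w' - area (sweep w').
  by rewrite -szw' eK dinv_K area_sweep.
rewrite Hw Hw' in H.
have HL : \sum_(0<=i<s) phi _ Kf (d w) (d w') s i
   = \sum_(0<=i<s) - (ind (r + k0%:Z - 1 < rank w i.+1) - ind (r + k0%:Z - 1 < rank w i)).
  apply: eq_big_nat => i /andP [_ hi].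
  rewrite /phi -hfg; [ | lia | lia].
  rewrite ds ds1 dps dps1 /d rankS.
  apply: phiL => //.
  move=> hri; apply: hmax => //; lia.
have HR : \sum_(s.+2<=i<n) phi _ Kf (d w) (d w') s i
   = \sum_(s.+2<=i<n) - (ind (r - 1 < rank w i.+1) - ind (r - 1 < rank w i)).
  apply: eq_big_nat => i /andP [hi1 hi2].
  rewrite /phi -hfg; [ | lia | lia].
  rewrite ds ds1 dps dps1 /d rankS.
  apply: phiR => //.
  move=> hri; apply: hright => //; lia.
have HB : blk _ Kf (d w) s - blk _ Kf (d w') s = -1.
  by rewrite /blk ds ds1 dps dps1; apply: blkE.
rewrite HL HR HB !sumrN in H.
rewrite (@telescope_sumr _ 0 s (fun i => ind (r + k0%:Z - 1 < rank w i))) // in H.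
rewrite (@telescope_sumr _ s.+2 n (fun i => ind (r - 1 < rank w i))) // in H.
rewrite rank0 hrn hrs2 -/r /ind in H.
move: H; case: ifP; case: ifP; case: ifP; case: ifP; lia.
Qed.
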